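(* Let $n,N,M$ be non-negative integers with $M\le N\le 2n-3$, and let $f$ be an $(n,N,M)$ $\mathbf{F}$-sequence with $M<N$ or $N<2n-3$. Then: 1. If $M<N-2$, setting $f_{N,M+1}$ to $f_{N-1,N-1}-1$ if $f_{N-1,M+1}=f_{N-1,N-1}$, and otherwise to either of $L_f(N,M+1)$ or $U_f(N,M+1)$, yields an $(n,N,M+1)$ $\mathbf{F}$-sequence. 2. If $M=N-2$, setting $f_{N,N-1}=f_{N-1,N-1}-1$ yields an $(n,N,N-1)$ $\mathbf{F}$-sequence. 3. If $M=N-1$, setting $f_{N,N}=f_{N-1,N-1}-1$ when $f_{N-1,N-1}>1$, or setting $f_{N,N}=f_{N-1,N-1}+1$ when $f_{N-1,N-1}<2n-N-1$, in either case yields an $(n,N,N)$ $\mathbf{F}$-sequence. 4. If $M=N$, setting $f_{N+1,0}$ to $f_{N,N}-1$ if $f_{N,0}=f_{N,N}$, and otherwise to either of $\max(0,f_{N,0}-1)$ or $f_{N,0}$, yields an $(n,N+1,0)$ $\mathbf{F}$-sequence.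
   Context: For a doubly indexed sequence (or matrix) $f$, define, with the convention that $f_{k,\ell}=0$ whenever $k$ or $\ell$ is negative, $$L_f(i,j):=\max\bigl(f_{i,j-1},\ f_{i-1,j}-1,\ f_{i,j-1}+f_{i-1,j}-f_{i-1,j-1}-1\bigr),\qquad U_f(i,j):=\min\bigl(f_{i-1,j},\ f_{i,j-1}+f_{i-1,j}-f_{i-1,j-1}\bigr).$$ Let $n,N,M$ be non-negative integers with $M\le N\le 2n-3$ and put $B=\max(N-1,M)$. An $(n,N,M)$ $\mathbf{F}$-sequence is a doubly indexed sequence $f_{i,j}$ of non-negative integers defined exactly for the (''valid'') indices $(i,j)$ in $\{(i,j):0\le j\le i\le N-1\}\cup\{(N,j):0\le j\le M\}$, such that: (1) the diagonal entries $f_{i,i}$, $0\le i\le B$, are positive integers with $f_{0,0}=2$, $f_{i,i}=f_{i-1,i-1}\pm1$ for $1\le i\le B$, and $f_{i,i}\le 2n-i-2$ for $0\le i\le B$; (2) $L_f(i,j)\le f_{i,j}\le U_f(i,j)$ for all valid indices $(i,j)$ with $0\le j\le i-2$; (3) for all valid indices $(i,j)$ with $0\le j\le i-1$, if $f_{i-1,j}=f_{i-1,i-1}$ then $f_{i,j}=f_{i-1,i-1}-1$. *)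

(* Defs.v *)
From mathcomp Require Import all_boot all_order all_algebra.
Set Implicit Arguments. Unset Strict Implicit. Unset Printing Implicit Defensive.
Import Order.TTheory GRing.Theory Num.Theory.
Local Open Scope ring_scope.

(* A doubly indexed sequence is represented as a total function
   nat -> nat -> int; only its values at valid indices matter. *)

(* Access with integer indices, using the convention f_{k,l} = 0 when
   k or l is negative. *)
Definition fat (f : nat -> nat -> int) (i j : int) : int :=
  match i, j with
  | Posz a, Posz b => f a b
  | _, _ => 0
  end.

Definition Lf (f : nat -> nat -> int) (i j : nat) : int :=
  let i' := i%:Z in let j' := j%:Z in
  Num.max (fat f i' (j' - 1))
    (Num.max (fat f (i' - 1) j' - 1)
             (fat f i' (j' - 1) + fat f (i' - 1) j' - fat f (i' - 1) (j' - 1) - 1)).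

Definition Uf (f : nat -> nat -> int) (i j : nat) : int :=
  let i' := i%:Z in let j' := j%:Z in
  Num.min (fat f (i' - 1) j')
          (fat f i' (j' - 1) + fat f (i' - 1) j' - fat f (i' - 1) (j' - 1)).

Definition valid (N M i j : nat) : bool :=
  ((j <= i)%N && (i < N)%N) || ((i == N) && (j <= M)%N).

(* (n,N,M) F-sequence (including the standing constraint M <= N <= 2n-3,
   the latter read in the integers). *)
Definition is_Fseq (n N M : nat) (f : nat -> nat -> int) : Prop :=
  let B := maxn N.-1 M in
  (M <= N)%N /\ N%:Z <= 2 * n%:Z - 3 /\
      (forall i j, valid N M i j -> 0 <= f i j) /\
      f 0%N 0%N = 2 /\
      (forall i, (i <= B)%N -> 0 < f i i /\ f i i <= 2 * n%:Z - i%:Z - 2) /\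
      (forall i, (1 <= i <= B)%N ->
           f i i = f i.-1 i.-1 + 1 \/ f i i = f i.-1 i.-1 - 1) /\
      (forall i j, valid N M i j -> (j + 2 <= i)%N ->
           Lf f i j <= f i j /\ f i j <= Uf f i j) /\
      (forall i j, valid N M i j -> (j < i)%N ->
           f i.-1 j = f i.-1 i.-1 -> f i j = f i.-1 i.-1 - 1).

Definition upd (f : nat -> nat -> int) (a b : nat) (x : int) : nat -> nat -> int :=
  fun i j => if (i == a) && (j == b) then x else f i j.

(* Main.v *)
Require Import Defs.
From mathcomp Require Import all_boot all_order all_algebra zify.
Import Order.TTheory GRing.Theory Num.Theory.
Local Open Scope ring_scope.
Set Implicit Arguments. Unset Strict Implicit.

Lemma subS1 (k : nat) : (k.+1%:Z - 1) = k%:Z.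
Proof. lia. Qed.
Lemma sub01 : (0%:Z - 1) = Negz 0.
Proof. reflexivity. Qed.

Lemma LfE f k j : Lf f k.+1 j.+1 =
  Num.max (f k.+1 j) (Num.max (f k j.+1 - 1) (f k.+1 j + f k j.+1 - f k j - 1)).
Proof. by rewrite /Lf !subS1. Qed.
Lemma UfE f k j : Uf f k.+1 j.+1 =
  Num.min (f k j.+1) (f k.+1 j + f k j.+1 - f k j).
Proof. by rewrite /Uf !subS1. Qed.
Lemma Lf0 f k : Lf f k.+1 0 = Num.max 0 (Num.max (f k 0%N - 1) (0 + f k 0%N - 0 - 1)).
Proof. by rewrite /Lf !subS1 sub01. Qed.
Lemma Uf0 f k : Uf f k.+1 0 = Num.min (f k 0%N) (0 + f k 0%N - 0).
Proof. by rewrite /Uf !subS1 sub01. Qed.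

Lemma LfE' f i j : (0 < i)%N -> Lf f i j.+1 =
  Num.max (f i j) (Num.max (f i.-1 j.+1 - 1) (f i j + f i.-1 j.+1 - f i.-1 j - 1)).
Proof. by case: i => // k _; rewrite LfE. Qed.
Lemma UfE' f i j : (0 < i)%N -> Uf f i j.+1 =
  Num.min (f i.-1 j.+1) (f i j + f i.-1 j.+1 - f i.-1 j).
Proof. by case: i => // k _; rewrite UfE. Qed.

Lemma upd_ne f a b x i j : (i < a)%N \/ (i = a /\ (j < b)%N) -> upd f a b x i j = f i j.
Proof. move=> H; rewrite /upd ifF //; lia. Qed.

Lemma upd_ne1 f a b x i j : i <> a -> upd f a b x i j = f i j.
Proof. move=> H; rewrite /upd ifF //; lia. Qed.

Lemma upd_eq f a b x : upd f a b x a b = x.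
Proof. by rewrite /upd !eqxx. Qed.

Lemma Lf_upd f a b x i j : (1 <= i)%N -> (i < a)%N \/ (i = a /\ (j <= b)%N) ->
  Lf (upd f a b x) i j = Lf f i j.
Proof.
case: i => [|k] // _ H; case: j H => [|j] H; rewrite ?Lf0 ?LfE /upd;
  rewrite !ifF //; lia.
Qed.

Lemma Uf_upd f a b x i j : (1 <= i)%N -> (i < a)%N \/ (i = a /\ (j <= b)%N) ->
  Uf (upd f a b x) i j = Uf f i j.
Proof.
case: i => [|k] // _ H; case: j H => [|j] H; rewrite ?Uf0 ?UfE /upd;
  rewrite !ifF //; lia.
Qed.

Lemma valid_prev N M i j : valid N M i j -> (j < i)%N ->
  valid N M i.-1 j /\ valid N M i.-1 i.-1.
Proof. rewrite /valid; lia. Qed.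

Lemma valid_diag N M i : (M <= N)%N -> (i <= maxn N.-1 M)%N -> valid N M i i.
Proof. rewrite /valid; lia. Qed.

Lemma extend n N M N' M' f a b x :
 is_Fseq n N M f -> (M' <= N')%N -> N'%:Z <= 2 * n%:Z - 3 ->
 (forall i j, valid N' M' i j -> valid N M i j \/ (i = a /\ j = b)) ->
 (forall i j, valid N M i j -> (i < a)%N \/ (i = a /\ (j < b)%N)) ->
 0 <= x ->
 (maxn N'.-1 M' = maxn N.-1 M \/
   [/\ maxn N'.-1 M' = (maxn N.-1 M).+1, a = maxn N'.-1 M', b = a,
       0 < x /\ x <= 2 * n%:Z - a%:Z - 2 &
       (x = f a.-1 a.-1 + 1 \/ x = f a.-1 a.-1 - 1)]) ->
 ((b + 2 <= a)%N -> Lf f a b <= x /\ x <= Uf f a b) ->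
 ((b < a)%N -> f a.-1 b = f a.-1 a.-1 -> x = f a.-1 a.-1 - 1) ->
 is_Fseq n N' M' (upd f a b x).
Proof.
case=> [HMN [HN [Hnn [H00 [Hdiag [Hstep [HLU H3]]]]]]].
move=> HMN' HN' Hval Hold Hx0 HB HLUx H3x.
have gE i j : valid N M i j -> upd f a b x i j = f i j.
  by move=> v; apply: upd_ne; apply: Hold.
have dv i : (i <= maxn N.-1 M)%N -> valid N M i i by apply: valid_diag.
split; first done. split; first done. split.
  move=> i j /Hval [v|[-> ->]]; [rewrite gE //; exact: Hnn | by rewrite upd_eq].
split.
  rewrite gE //; rewrite /valid; lia.
split.
  move=> i Hi; case: HB => [E|[E1 Ea Eb [Hxp Hx2] Hxs]].
    rewrite E in Hi; rewrite gE; [exact: Hdiag | exact: dv].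
  have [Hi'|Hi'] := leqP i (maxn N.-1 M).
    rewrite gE; [exact: Hdiag | exact: dv].
  have Ei : i = a by lia.
  by rewrite Ei; subst b; rewrite upd_eq.
split.
  move=> i /andP[Hi1 Hi]; case: HB => [E|[E1 Ea Eb [Hxp Hx2] Hxs]].
    rewrite E in Hi; rewrite !gE; [ | apply: dv; lia | exact: dv].
    by apply: Hstep; apply/andP.
  have [Hi'|Hi'] := leqP i (maxn N.-1 M).
    rewrite !gE; [ | apply: dv; lia | exact: dv].
    by apply: Hstep; apply/andP.
  have Ei : i = a by lia.
  rewrite Ei; subst b; rewrite upd_eq upd_ne1; last lia.
  by case: Hxs; [left|right].
split.
  move=> i j /Hval [v|[-> ->]] Hij.
    have Ho := Hold i j v.
    rewrite gE // Lf_upd ?Uf_upd; try lia. exact: HLU.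
  rewrite upd_eq Lf_upd ?Uf_upd; try lia.
move=> i j /Hval [v|[-> ->]] Hji.
  have Ho := Hold i j v.
  have [v1 v2] := valid_prev v Hji.
  rewrite !gE //; exact: H3.
rewrite upd_eq !upd_ne1; try lia.
Qed.

Lemma I3 n N M f i j : is_Fseq n N M f -> valid N M i j -> (j + 2 <= i)%N ->
  f i.-1 j - 1 <= f i j /\ f i j <= f i.-1 j.
Proof.
case=> [_ [_ [_ [_ [_ [_ [HLU _]]]]]]] v h.
have := HLU i j v h.
case: i v h => [|[|k]] v h; try lia.
case: j v h => [|j] v h; rewrite /= ?Lf0 ?Uf0 ?LfE ?UfE; lia.
Qed.

Lemma I2 n N M f i j : is_Fseq n N M f -> valid N M i j.+1 -> (j.+3 <= i)%N ->
  f i j <= f i j.+1.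
Proof.
case=> [_ [_ [_ [_ [_ [_ [HLU _]]]]]]] v h.
have := HLU i j.+1 v ltac:(lia).
case: i v h => [|k] v h; try lia.
rewrite /= LfE; lia.
Qed.

Lemma I1 n N M f : is_Fseq n N M f -> forall i j, valid N M i j -> (j < i)%N ->
  f i j <= f i.-1 i.-1 - 1.
Proof.
move=> Hf; have Hf' := Hf; case: Hf' => [HMN [_ [_ [_ [_ [Hstep [_ H3]]]]]]].
elim=> [|k IH] j v hj //=.
have [e|lt] : j = k \/ (j < k)%N by lia.
  subst; have := H3 k.+1 k v hj erefl; rewrite /=; lia.
have [v1 _] := valid_prev v hj.
have h1 := IH j v1 lt.
have h3 := I3 Hf v (_ : (j + 2 <= k.+1)%N).
have hs := Hstep k (_ : (0 < k <= maxn N.-1 M)%N).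
move: (v); rewrite /valid => v'.
have {h3} [h3 h3'] := h3 ltac:(lia).
have {hs} hs := hs ltac:(lia).
rewrite /= in h3 h3'.
case: (f k j =P f k k) => e.
  have := H3 k.+1 j v hj e; rewrite /=; lia.
lia.
Qed.

Lemma par n N M f : is_Fseq n N M f -> forall i, (i <= maxn N.-1 M)%N ->
  exists z : int, f i i + i%:Z = 2 * z.
Proof.
case=> [HMN [_ [_ [H00 [_ [Hstep _]]]]]].
elim=> [|k IH] h.
  exists 1; rewrite H00; done.
have [z hz] := IH (ltnW h).
case: (Hstep k.+1 _) => [|e|e]; first by rewrite h.
  by exists (z + 1); rewrite e /=; lia.
by exists z; rewrite e /=; lia.
Qed.

Unset Implicit Arguments.

Theorem proposition1 (n N M : nat) (f : nat -> nat -> int) :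
  (M <= N)%N -> N%:Z <= 2 * n%:Z - 3 ->
  is_Fseq n N M f ->
  ((M < N)%N \/ N%:Z < 2 * n%:Z - 3) ->
  [/\
   (* 1. *)
   ((M + 2 < N)%N ->
      forall x : int,
        (if f N.-1 M.+1 == f N.-1 N.-1 then x = f N.-1 N.-1 - 1
         else x = Lf f N M.+1 \/ x = Uf f N M.+1) ->
        is_Fseq n N M.+1 (upd f N M.+1 x)),
   (* 2. *)
   ((M + 2 = N)%N ->
        is_Fseq n N M.+1 (upd f N M.+1 (f N.-1 N.-1 - 1))),
   (* 3. *)
   ((M + 1 = N)%N ->
      (1 < f N.-1 N.-1 -> is_Fseq n N N (upd f N N (f N.-1 N.-1 - 1))) /\
      (f N.-1 N.-1 < 2 * n%:Z - N%:Z - 1 ->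
          is_Fseq n N N (upd f N N (f N.-1 N.-1 + 1)))) &
   (* 4. *)
   (M = N ->
      forall x : int,
        (if f N 0%N == f N N then x = f N N - 1
         else x = Num.max 0 (f N 0%N - 1) \/ x = f N 0%N) ->
        is_Fseq n N.+1 0 (upd f N.+1 0 x))].
Proof.
move=> HMN HN Hf Hor.
have Hf' := Hf; case: Hf' => [_ [_ [Hnn [H00 [Hdiag [Hstep [HLU H3]]]]]]].
split.
- move=> hM x hx.
  have vNM : valid N M N M by rewrite /valid; lia.
  have [c1 c2] := I3 Hf vNM ltac:(lia).
  have vb : valid N M N.-1 M.+1 by rewrite /valid; lia.
  have va : valid N M N.-1 M by rewrite /valid; lia.
  have ab : f N.-1 M <= f N.-1 M.+1.
    have [h|h] := leqP M.+3 N.-1.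
      exact: (I2 Hf vb h).
    have EN : N = M.+3 by lia.
    have vc : valid N M N.-1 M.+1 by rewrite /valid; lia.
    move: (H3 _ _ vc) (I1 Hf va); rewrite EN /= => e1 e2.
    have := e1 ltac:(lia) erefl; have := e2 ltac:(lia); lia.
  have ad : f N.-1 M <= f N.-1 N.-1.
    have := I1 Hf va ltac:(lia).
    have := Hstep N.-1 ltac:(lia); lia.
  have c3 := H3 N M vNM ltac:(lia).
  have dpos := (Hdiag N.-1 ltac:(lia)).1.
  have c0 := Hnn _ _ vNM.
  have LE : Lf f N M.+1 = Num.max (f N M) (Num.max (f N.-1 M.+1 - 1)
      (f N M + f N.-1 M.+1 - f N.-1 M - 1)).
    by rewrite LfE'; lia.
  have UE : Uf f N M.+1 = Num.min (f N.-1 M.+1) (f N M + f N.-1 M.+1 - f N.-1 M).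
    by rewrite UfE'; lia.
  rewrite LE UE in hx.
  apply: (extend Hf); rewrite ?LE ?UE; try (rewrite /valid; lia).
  + case: eqP hx => [e|ne] hx; lia.
  + move=> _; case: eqP hx => [e|ne] hx; lia.
  + move=> _ e; rewrite e eqxx in hx; exact: hx.
- move=> hM.
  have dpos := (Hdiag N.-1 ltac:(lia)).1.
  apply: (extend Hf); try (rewrite /valid; lia).
  all: try (left; lia).
  all: try done.
- move=> hM.
  have dpos := (Hdiag N.-1 ltac:(lia)).
  have [z hz] : exists z : int, f N.-1 N.-1 + (N.-1)%:Z = 2 * z by apply: (par Hf); lia.
  split => hd.
  + apply: (extend Hf); try (rewrite /valid; lia).
    all: try (right; split; lia).
  + apply: (extend Hf); try (rewrite /valid; lia).
    all: try (right; split; lia).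
- move=> EM x hx; subst M.
  have vN0 : valid N N N 0 by rewrite /valid; lia.
  have c0 := Hnn _ _ vN0.
  have dpos := (Hdiag N ltac:(lia)).1.
  apply: (extend Hf); try (rewrite /valid; lia).
  all: try (left; lia).
  all: try (case: eqP hx => [e|ne] hx; lia).
  all: try (move=> _; rewrite Lf0 Uf0; case: eqP hx => [e|ne] hx; lia).
  all: try (move=> _ /= e; rewrite e eqxx in hx; exact: hx).
Qed.
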